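(* Let $g_{ij}(x^k)$ be a (non-degenerate) metric on an $n$-dimensional manifold with coordinates $x^k$, and let $V_0(t,x^k)$, $V_1(t,x^k)$ be smooth functions. Consider the perturbed Lagrangian \[ L\left(t,x^{k},\dot{x}^{k},\varepsilon\right)=\frac{1}{2}g_{ij}\dot{x}^{i}\dot{x}^{j}-V_{0}(t,x^{k})-\varepsilon V_{1}(t,x^{k})+O(\varepsilon^{2}). \] Then every first-order approximate Noether point symmetry $X=X_0+\varepsilon X_1$, $X_A=\xi_A(t,x^k)\partial_t+\eta_A^i(t,x^k)\partial_i$ ($A=0,1$), of $L$ is generated from the homothetic algebra of $g_{ij}$: $\xi_0=\xi_0(t)$, $\xi_1=\xi_1(t)$, and the spatial parts $\eta_A^i(t,\cdot)$ (for each fixed $t$) are homothetic (or Killing) vector fields of $g_{ij}$, i.e. $\mathcal{L}_{\eta_A}g_{ij}=\xi_{A,t}\,g_{ij}$ for $A=0,1$.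
   Context: Dot denotes total derivative with respect to $t$; $\partial_i=\partial/\partial x^i$; $\mathcal{L}_{\eta}$ denotes the Lie derivative along $\eta$. A vector field $Y$ is a homothetic vector field (HV) of $g_{ij}$ if $\mathcal{L}_Y g_{ij}=2\psi g_{ij}$ with $\psi$ constant (a Killing vector if $\psi=0$). A first-order approximate Noether point symmetry of $L=L_0+\varepsilon L_1$ (here $L_0=\frac12 g_{ij}\dot x^i\dot x^j-V_0$, $L_1=-V_1$) with generator $X=X_0+\varepsilon X_1$ is one for which there exist functions $f_A(t,x^k)$, $A=0,1$, such that \[ \left(X_0^{[1]}+\varepsilon X_1^{[1]}\right)(L_0+\varepsilon L_1)+(L_0+\varepsilon L_1)\frac{d}{dt}(\xi_0+\varepsilon\xi_1)-\frac{d}{dt}(f_0+\varepsilon f_1)=O(\varepsilon^2), \] where $X_A^{[1]}=\xi_A\partial_t+\eta_A^i\partial_i+(\dot\eta_A^i-\dot x^i\dot\xi_A)\partial_{\dot x^i}$ is the first prolongation and the condition is imposed identically in $t,x^k,\dot x^k$ at orders $\varepsilon^0$ and $\varepsilon^1$. *)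

(* Defs.v *)
From HB Require Import structures.
From mathcomp Require Import all_boot all_order all_algebra.
From mathcomp Require Import all_classical all_reals all_analysis.
Set Implicit Arguments. Unset Strict Implicit. Unset Printing Implicit Defensive.
Import Order.TTheory GRing.Theory Num.Theory.
Import numFieldNormedType.Exports.
Local Open Scope classical_set_scope.
Local Open Scope ring_scope.

Section Defs.
Variables (R : realType) (n : nat).
Local Notation E := 'rV[R]_n.

Definition ecoord (i : 'I_n) : E := delta_mx 0 i.

Definition dt {V : normedModType R} (F : R -> E -> V) (t : R) (x : E) : V :=
  derive (fun s => F s x) t 1.
Definition dx {V : normedModType R} (i : 'I_n) (F : R -> E -> V) (t : R) (x : E) : V :=
  derive (fun y => F t y) x (ecoord i).

(* total derivative d/dt of F(t,x) on jet space (t,x,xdot=v) *)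
Definition totd {V : normedModType R} (F : R -> E -> V) (t : R) (x v : E) : V :=
  dt F t x + \sum_(k < n) v 0 k *: dx k F t x.

Definition dLt (L : R -> E -> E -> R) t x v : R := derive (fun s => L s x v) t 1.
Definition dLx (L : R -> E -> E -> R) (i : 'I_n) t x v : R :=
  derive (fun y => L t y v) x (ecoord i).
Definition dLv (L : R -> E -> E -> R) (i : 'I_n) t x v : R :=
  derive (fun w => L t x w) v (ecoord i).

Definition prolong1 (xi : R -> E -> R) (eta : R -> E -> E) (L : R -> E -> E -> R)
  (t : R) (x v : E) : R :=
  xi t x * dLt L t x v
  + \sum_(i < n) eta t x 0 i * dLx L i t x v
  + \sum_(i < n) ((totd eta t x v) 0 i - v 0 i * totd xi t x v) * dLv L i t x v.

Definition Lag0 (g : E -> 'M[R]_n) (V0 : R -> E -> R) (t : R) (x v : E) : R :=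
  2^-1 * (\sum_(i < n) \sum_(j < n) g x i j * v 0 i * v 0 j) - V0 t x.
Definition Lag1 (V1 : R -> E -> R) (t : R) (x v : E) : R := - V1 t x.

Definition regular {V : normedModType R} (U : set E) (F : R -> E -> V) : Prop :=
  forall t x, U x -> derivable (fun s => F s x) t 1 /\ differentiable (fun y => F t y) x.

(* first-order approximate Noether point symmetry of L0 + eps L1 on R x U,
   with generator X0 + eps X1, X_A = xi_A d_t + eta_A^i d_i *)
Definition approx_noether (U : set E) (L0 L1 : R -> E -> E -> R)
  (xi0 xi1 : R -> E -> R) (eta0 eta1 : R -> E -> E) : Prop :=
  exists f0 f1 : R -> E -> R, regular U f0 /\ regular U f1 /\
   forall t x v, U x ->
     (* order eps^0 *)
     prolong1 xi0 eta0 L0 t x v + L0 t x v * totd xi0 t x v - totd f0 t x v = 0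
     (* order eps^1 *)
  /\ prolong1 xi1 eta1 L0 t x v + prolong1 xi0 eta0 L1 t x v
     + L1 t x v * totd xi0 t x v + L0 t x v * totd xi1 t x v - totd f1 t x v = 0.

Definition lie_metric (g : E -> 'M[R]_n) (Y : E -> E) (x : E) (i j : 'I_n) : R :=
  \sum_(k < n) (Y x 0 k * derive (fun y => g y i j) x (ecoord k)
               + g x k j * derive (fun y => Y y 0 k) x (ecoord i)
               + g x i k * derive (fun y => Y y 0 k) x (ecoord j)).

End Defs.

(* Main.v *)
Require Import Defs.
From HB Require Import structures.
From mathcomp Require Import all_boot all_order all_algebra.
From mathcomp Require Import all_classical all_reals all_analysis.
From mathcomp Require Import ring lra.
Import Order.TTheory GRing.Theory Num.Theory.
Import numFieldNormedType.Exports.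
Local Open Scope classical_set_scope.
Local Open Scope ring_scope.
Set Implicit Arguments. Unset Strict Implicit. Unset Printing Implicit Defensive.
Section Aux.
Variables (R : realType) (n : nat).
Local Notation E := 'rV[R]_n.

Definition qf (M : 'I_n -> 'I_n -> R) (v : E) : R :=
  \sum_(i < n) \sum_(j < n) M i j * v 0 i * v 0 j.
Definition bf (M : 'I_n -> 'I_n -> R) (v w : E) : R :=
  \sum_(i < n) \sum_(j < n) M i j * (v 0 i * w 0 j + w 0 i * v 0 j).
Definition lf (c : 'I_n -> R) (v : E) : R := \sum_(k < n) v 0 k * c k.

Lemma qf_exp M v w s : qf M (v + s *: w) = qf M v + s * bf M v w + s^+2 * qf M w.
Proof.
rewrite /qf /bf mulr_sumr [s^+2 * _]mulr_sumr -!big_split /=; apply eq_bigr => i _.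
rewrite mulr_sumr [s^+2 * _]mulr_sumr -!big_split; apply eq_bigr => j _; rewrite /= !mxE; simpl; ring.
Qed.

Lemma qfZ M v s : qf M (s *: v) = s^+2 * qf M v.
Proof.
rewrite /qf mulr_sumr; apply eq_bigr => i _; rewrite mulr_sumr; apply eq_bigr => j _.
rewrite !mxE; simpl; ring.
Qed.

Lemma bfZ M v w s : bf M (s *: v) w = s * bf M v w.
Proof.
rewrite /bf mulr_sumr; apply eq_bigr => i _; rewrite mulr_sumr; apply eq_bigr => j _.
rewrite !mxE; simpl; ring.
Qed.

Lemma lf_exp c v w s : lf c (v + s *: w) = lf c v + s * lf c w.
Proof.
rewrite /lf mulr_sumr -big_split; apply eq_bigr => i _; rewrite !mxE; simpl; ring.
Qed.

Lemma lfZ c v s : lf c (s *: v) = s * lf c v.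
Proof. rewrite /lf mulr_sumr; apply eq_bigr => i _; rewrite !mxE; simpl; ring. Qed.

Lemma ecoordE (k j : 'I_n) : ecoord R k 0 j = (j == k)%:R.
Proof. by rewrite /ecoord mxE eqxx. Qed.

Lemma sum_delta (F : 'I_n -> R) k : \sum_(j < n) F j * (j == k)%:R = F k.
Proof.
rewrite (bigD1 k) //= eqxx mulr1 big1 ?addr0 // => j /negbTE ->; by rewrite mulr0.
Qed.

Lemma lf_ecoord c (k : 'I_n) : lf c (ecoord R k) = c k.
Proof. rewrite /lf -(sum_delta c k); apply eq_bigr => j _; rewrite ecoordE mulrC. by []. Qed.

Lemma bf_ecoord M v (k : 'I_n) : bf M v (ecoord R k) = \sum_(j < n) (M k j + M j k) * v 0 j.
Proof.
rewrite /bf.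
transitivity (\sum_(i < n) \sum_(j < n) (M i j * v 0 i) * (j == k)%:R
   + \sum_(i < n) (\sum_(j < n) M i j * v 0 j) * (i == k)%:R).
  rewrite -big_split; apply eq_bigr => i _; rewrite mulr_suml -big_split.
  apply eq_bigr => j _; rewrite !ecoordE; simpl; ring.
under eq_bigr do rewrite sum_delta.
rewrite sum_delta -big_split; apply eq_bigr => j _; simpl; ring.
Qed.

Lemma sum_v_bf M (v : E) : \sum_(i < n) v 0 i * bf M v (ecoord R i) = 2 * qf M v.
Proof.
under eq_bigr do rewrite bf_ecoord mulr_sumr.
transitivity (qf M v + \sum_(i < n) \sum_(j < n) M j i * v 0 j * v 0 i).
  rewrite /qf -big_split; apply eq_bigr => i _; rewrite -big_split.
  apply eq_bigr => j _; simpl; ring.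
rewrite exchange_big /=; rewrite -/(qf M v); simpl; ring.
Qed.

Lemma qf_polar M : (forall v, qf M v = 0) -> forall a b, M a b + M b a = 0.
Proof.
move=> H a b; have := qf_exp M (ecoord R a) (ecoord R b) 1.
rewrite !H bf_ecoord.
under eq_bigr do rewrite ecoordE.
rewrite sum_delta; move=> /esym; rewrite mul1r expr1n mulr0 !addr0 add0r addrC. by [].
Qed.

Lemma derive_affq (f : E -> R) a v c d :
  (forall h, h != 0 -> h^-1 * (f (h *: v + a) - f a) = c + h * d) -> derive f a v = c.
Proof.
move=> H; rewrite /derive; apply: cvg_lim => //.
have hc : (fun h : R => c + h * d) @ 0 --> c + 0 * d.
  apply: cvgD; first exact: cvg_cst.
  apply: cvgMr_tmp; exact: cvg_id.
rewrite mul0r addr0 in hc.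
have hc' : (fun h : R => c + h * d) @ 0^' --> c by apply: cvg_within_filter.
apply: cvg_trans hc'.
apply: near_eq_cvg; near=> h => /=.
rewrite /shift /=.
have hh : h != 0 by near: h; exact: nbhs_dnbhs_neq.
by rewrite -H.
Unshelve. all: by end_near.
Qed.

End Aux.
Section Aux2.
Variables (R : realType) (n : nat).
Local Notation E := 'rV[R]_n.

Lemma derive_cmul (f : E -> R) (r : R) a e : derivable f a e ->
  derive (fun y => r * f y) a e = r * derive f a e.
Proof. move=> df; exact: (deriveZ r df). Qed.

Lemma derivable_cmul (f : E -> R) (r : R) a e : derivable f a e ->
  derivable (fun y => r * f y) a e.
Proof. move=> df; exact: (derivableZ (k:=r) df). Qed.

Lemma derive_mulc (f : E -> R) (r : R) a e : derivable f a e ->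
  derive (fun y => f y * r) a e = derive f a e * r.
Proof.
move=> df; rewrite (_ : (fun y => f y * r) = (fun y => r * f y)); last first.
  by apply/funext => y; rewrite mulrC.
by rewrite derive_cmul // mulrC.
Qed.

Lemma derivable_mulc (f : E -> R) (r : R) a e : derivable f a e ->
  derivable (fun y => f y * r) a e.
Proof.
move=> df; rewrite (_ : (fun y => f y * r) = (fun y => r * f y)); last first.
  by apply/funext => y; rewrite mulrC.
exact: derivable_cmul.
Qed.

Lemma derive_subf (f g : E -> R) a e : derivable f a e -> derivable g a e ->
  derive (fun y => f y - g y) a e = derive f a e - derive g a e.
Proof. move=> df dg; exact: (deriveB df dg). Qed.

Lemma derivable_subf (f g : E -> R) a e : derivable f a e -> derivable g a e ->
  derivable (fun y => f y - g y) a e.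
Proof. move=> df dg; exact: (derivableB df dg). Qed.

Lemma derive_sumf (F : 'I_n -> E -> R) a e : (forall i, derivable (F i) a e) ->
  derive (fun y => \sum_(i < n) F i y) a e = \sum_(i < n) derive (F i) a e.
Proof. move=> dF; have := derive_sum dF; by rewrite fct_sumE. Qed.

Lemma derivable_sumf (F : 'I_n -> E -> R) a e : (forall i, derivable (F i) a e) ->
  derivable (fun y => \sum_(i < n) F i y) a e.
Proof. move=> dF; have := derivable_sum dF; by rewrite fct_sumE. Qed.

Lemma derive_addcst (f : R -> R) (K : R) a e :
  derive (fun y => K + f y) a e = derive f a e.
Proof.
rewrite /derive; f_equal; f_equal; apply/funext => h /=.
by rewrite opprD addrACA subrr add0r.
Qed.

Lemma dx_comp (F : R -> E -> E) t x k i : differentiable (F t) x ->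
  (dx k F t x) 0 i = derive (fun y => F t y 0 i) x (ecoord R k).
Proof.
move=> dF; have hq : derivable (F t) x (ecoord R k) := diff_derivable dF.
rewrite /dx /derive; symmetry; apply: cvg_lim => //.
pose q := fun h : R => h^-1 *: ((F t \o shift x) (h *: ecoord R k) - F t x).
have := @cvg_comp _ _ _ q (fun M : 'rV[R]_n => M 0 i) 0^' _ _ hq (@coord_continuous _ _ _ 0 i _).
move=> H; apply: cvg_trans H; apply: near_eq_cvg; apply: nearW => h /=.
by rewrite /q !mxE.
Qed.

End Aux2.
Section Aux3.
Variables (R : realType) (n : nat).
Local Notation E := 'rV[R]_n.

Lemma Lag0E (g : E -> 'M[R]_n) V0 t x w :
  Lag0 g V0 t x w = 2^-1 * qf (fun i j => g x i j) w - V0 t x.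
Proof. by []. Qed.

Lemma dLv_Lag0 (g : E -> 'M[R]_n) V0 t x v k :
  dLv (Lag0 g V0) k t x v = 2^-1 * bf (fun i j => g x i j) v (ecoord R k).
Proof.
rewrite /dLv.
apply: (derive_affq (d := 2^-1 * qf (fun i j => g x i j) (ecoord R k))) => h hn0.
rewrite !Lag0E [h *: _ + v]addrC qf_exp; field; exact: hn0.
Qed.

Lemma dLv_Lag1 (V1 : R -> E -> R) t x v k : dLv (Lag1 V1) k t x v = 0.
Proof. rewrite /dLv /Lag1; exact: derive_cst. Qed.

Lemma dLt_Lag0 (g : E -> 'M[R]_n) V0 t x w :
  dLt (Lag0 g V0) t x w = derive (fun s => - V0 s x) t 1.
Proof. rewrite /dLt /Lag0; exact: (derive_addcst (fun s => - V0 s x)). Qed.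

Lemma dLx_Lag0 (g : E -> 'M[R]_n) V0 t x w k :
  (forall i j, differentiable (fun y => g y i j) x) ->
  differentiable (fun y => V0 t y) x ->
  dLx (Lag0 g V0) k t x w =
  2^-1 * qf (fun i j => derive (fun y => g y i j) x (ecoord R k)) w
  - derive (fun y => V0 t y) x (ecoord R k).
Proof.
move=> dg dV.
have dg' : forall i j, derivable (fun y => g y i j) x (ecoord R k).
  by move=> i j; exact: diff_derivable.
have D0 : forall i j, derivable (fun y => g y i j * w 0 i) x (ecoord R k).
  by move=> i j; apply: derivable_mulc; exact: dg'.
have D1 : forall i j, derivable (fun y => g y i j * w 0 i * w 0 j) x (ecoord R k).
  by move=> i j; apply: derivable_mulc; exact: D0.
have D2 : forall i, derivable (fun y => \sum_(j < n) g y i j * w 0 i * w 0 j) x (ecoord R k).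
  by move=> i; apply: derivable_sumf => j; exact: D1.
have D3 : derivable (fun y => \sum_(i < n) \sum_(j < n) g y i j * w 0 i * w 0 j) x (ecoord R k).
  by apply: derivable_sumf => i; exact: D2.
rewrite /dLx /Lag0 derive_subf; last exact: diff_derivable.
  rewrite derive_cmul // derive_sumf //; congr (_ * _ - _); rewrite /qf.
  apply: eq_bigr => i _; rewrite derive_sumf //; apply: eq_bigr => j _.
  by rewrite derive_mulc // derive_mulc.
exact: derivable_cmul.
Qed.

End Aux3.
Section Aux4.
Variables (R : realType) (n : nat).
Local Notation E := 'rV[R]_n.

Lemma totd_scalR (F : R -> E -> R) t x v s :
  totd F t x (s *: v) = dt F t x + s * lf (fun k => dx k F t x) v.
Proof.
rewrite /totd /lf mulr_sumr; congr (_ + _); apply eq_bigr => k _; rewrite !mxE.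
by rewrite -scalerA.
Qed.

Lemma totd_scalV (F : R -> E -> E) t x v s i :
  (totd F t x (s *: v)) 0 i = dt F t x 0 i + s * \sum_(k < n) v 0 k * (dx k F t x) 0 i.
Proof.
rewrite /totd mxE summxE mulr_sumr; congr (_ + _); apply eq_bigr => k _; rewrite !mxE.
by rewrite mulrA.
Qed.

Lemma sum_lin4 (F a b c d : 'I_n -> R) s :
  (forall i, F i = a i + s * b i + s^+2 * c i + s^+3 * d i) ->
  \sum_(i < n) F i = \sum_(i < n) a i + s * \sum_(i < n) b i
     + s^+2 * \sum_(i < n) c i + s^+3 * \sum_(i < n) d i.
Proof.
move=> H; rewrite (eq_bigr _ (fun i _ => H i)) !big_split /= -!mulr_sumr //.
Qed.

End Aux4.
Section Aux5.
Variables (R : realType) (n : nat).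
Local Notation E := 'rV[R]_n.

Lemma core_poly (g : E -> 'M[R]_n) V0 (xi : R -> E -> R) (eta : R -> E -> E) t x v :
  (forall i j, differentiable (fun y => g y i j) x) ->
  differentiable (fun y => V0 t y) x ->
  let G := fun i j => g x i j in
  let B := fun i => bf G v (ecoord R i) in
  let A := fun i => \sum_(k < n) v 0 k * (dx k eta t x) 0 i in
  let tau := dt xi t x in
  let l := lf (fun k => dx k xi t x) v in
  let q := fun i => qf (fun a b => derive (fun y => g y a b) x (ecoord R i)) v in
  exists a0 a1, forall s,
   prolong1 xi eta (Lag0 g V0) t x (s *: v) + Lag0 g V0 t x (s *: v) * totd xi t x (s *: v)
   = a0 + s * a1
     + s^+2 * (\sum_(i < n) 2^-1 * (eta t x 0 i * q i)
               + \sum_(i < n) (2^-1 * (A i * B i) - tau * (2^-1 * (v 0 i * B i)))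
               + 2^-1 * qf G v * tau)
     + s^+3 * (\sum_(i < n) (- l * (2^-1 * (v 0 i * B i))) + 2^-1 * qf G v * l).
Proof.
move=> dg dV G B A tau l q.
exists (xi t x * derive (fun s => - V0 s x) t 1
        + \sum_(i < n) (- (eta t x 0 i * derive (fun y => V0 t y) x (ecoord R i)))
        - V0 t x * tau).
exists (\sum_(i < n) 2^-1 * (dt eta t x 0 i * B i) - V0 t x * l).
move=> s; rewrite /prolong1 dLt_Lag0 Lag0E qfZ totd_scalR.
under eq_bigr do rewrite dLx_Lag0 // qfZ.
under [X in _ + X + _ = _]eq_bigr do rewrite dLv_Lag0 bfZ totd_scalV mxE.
rewrite [X in _ + X + _ + _ = _](@sum_lin4 _ _ _
   (fun i => - (eta t x 0 i * derive (fun y => V0 t y) x (ecoord R i)))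
   (fun=> 0) (fun i => 2^-1 * (eta t x 0 i * q i)) (fun=> 0) s); last first.
  by move=> i; rewrite /q; ring.
rewrite [X in _ + X + _ = _](@sum_lin4 _ _ _ (fun=> 0)
   (fun i => 2^-1 * (dt eta t x 0 i * B i))
   (fun i => 2^-1 * (A i * B i) - tau * (2^-1 * (v 0 i * B i)))
   (fun i => - l * (2^-1 * (v 0 i * B i))) s); last first.
  by move=> i; rewrite /A /B /tau /l /G; ring.
rewrite !big1_eq /G /tau /l; ring.
Qed.
End Aux5.
Section Aux6.
Variables (R : realType) (n : nat).
Local Notation E := 'rV[R]_n.

Lemma extract4 a0 a1 c d :
  (forall s : R, a0 + s * a1 + s^+2 * c + s^+3 * d = 0) -> c = 0 /\ d = 0.
Proof.
move=> H; have h0 := H 0; have h1 := H 1; have h2 := H (-1); have h3 := H 2.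
rewrite !exprS !expr0 in h0 h1 h2 h3.
split; lra.
Qed.

Lemma extract_core (P : R -> R) a0 a1 C D e0 e1 :
  (forall s, P s = a0 + s * a1 + s^+2 * C + s^+3 * D) ->
  (forall s, P s + (e0 + s * e1) = 0) -> C = 0 /\ D = 0.
Proof.
move=> HP H; apply: (@extract4 (a0 + e0) (a1 + e1)) => s.
by rewrite -(H s) HP; ring.
Qed.

Lemma qf_lin (P Q : 'I_n -> 'I_n -> R) r (v : E) :
  qf (fun a b => P a b - r * Q a b) v = qf P v - r * qf Q v.
Proof.
rewrite /qf mulr_sumr -sumrB; apply eq_bigr => a _.
rewrite mulr_sumr -sumrB; apply eq_bigr => b _; simpl; ring.
Qed.

Lemma D_simpl (M : 'I_n -> 'I_n -> R) (v : E) l :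
  \sum_(i < n) (- l * (2^-1 * (v 0 i * bf M v (ecoord R i)))) + 2^-1 * qf M v * l
  = - 2^-1 * (qf M v * l).
Proof.
rewrite -mulr_sumr -mulr_sumr sum_v_bf; ring.
Qed.

Lemma cubic_arg (M : 'I_n -> 'I_n -> R) (c : 'I_n -> R) :
  (exists w, qf M w != 0) -> (forall v, qf M v * lf c v = 0) -> forall k, c k = 0.
Proof.
move=> [w hw] H k.
have lw : lf c w = 0.
  by have /eqP := H w; rewrite mulf_eq0 (negbTE hw) /= => /eqP.
have Hs : forall s, (qf M w + s * bf M w (ecoord R k) + s^+2 * qf M (ecoord R k)) * (s * c k) = 0.
  by move=> s; have := H (w + s *: ecoord R k); rewrite qf_exp lf_exp lf_ecoord lw add0r.
case: (eqVneq (c k) 0) => // ck.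
have Z : forall s, s != 0 ->
   qf M w + s * bf M w (ecoord R k) + s^+2 * qf M (ecoord R k) = 0.
  move=> s s0; have /eqP := Hs s; rewrite mulf_eq0 mulf_eq0 (negbTE s0) (negbTE ck) /=.
  by rewrite orbF => /eqP.
have z1 := Z 1 (oner_neq0 _).
have z2 := Z (-1) (ltac:(by rewrite oppr_eq0 oner_neq0)).
have z3 := Z 2 (ltac:(by rewrite pnatr_eq0)).
rewrite !expr2 in z1 z2 z3.
have : qf M w = 0 by lra.
by move/eqP; rewrite (negbTE hw).
Qed.

Lemma exists_qf_nz (M : 'I_n -> 'I_n -> R) :
  (forall a b, M a b = M b a) -> (exists a b, M a b != 0) -> exists w, qf M w != 0.
Proof.
move=> Ms [a [b hab]].
case: (pselect (exists w, qf M w != 0)) => // Hn.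
have H : forall w, qf M w = 0.
  move=> w; apply/eqP; apply/negPn/negP => hw; apply: Hn; by exists w.
have := qf_polar H a b; rewrite (Ms b a) => e.
have : M a b = 0 by lra.
by move/eqP; rewrite (negbTE hab).
Qed.

End Aux6.
Section Aux7.
Variables (R : realType) (n : nat).
Local Notation E := 'rV[R]_n.

Lemma ex12 (F : 'I_n -> 'I_n -> 'I_n -> R) :
  \sum_(a < n) \sum_(b < n) \sum_(c < n) F a b c = \sum_(b < n) \sum_(a < n) \sum_(c < n) F a b c.
Proof. exact: exchange_big. Qed.

Lemma ex23 (F : 'I_n -> 'I_n -> 'I_n -> R) :
  \sum_(a < n) \sum_(b < n) \sum_(c < n) F a b c = \sum_(a < n) \sum_(c < n) \sum_(b < n) F a b c.
Proof. apply eq_bigr => a _; exact: exchange_big. Qed.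

Lemma lie_qf (g : E -> 'M[R]_n) (Y : E -> E) x (v : E) :
  \sum_(i < n) Y x 0 i * qf (fun a b => derive (fun y => g y a b) x (ecoord R i)) v
  + \sum_(i < n) (\sum_(k < n) v 0 k * derive (fun y => Y y 0 i) x (ecoord R k))
                 * bf (fun a b => g x a b) v (ecoord R i)
  = qf (fun a b => lie_metric g Y x a b) v.
Proof.
pose dG : 'I_n -> 'I_n -> 'I_n -> R := fun c a b => derive (fun y => g y a b) x (ecoord R c).
pose dY : 'I_n -> 'I_n -> R := fun a c => derive (fun y => Y y 0 c) x (ecoord R a).
have L1 : \sum_(i < n) Y x 0 i * qf (fun a b => dG i a b) v =
   \sum_(a < n) \sum_(b < n) \sum_(c < n) Y x 0 c * dG c a b * v 0 a * v 0 b.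
  rewrite [RHS]ex23 [RHS]ex12 /qf; apply eq_bigr => c _.
  rewrite mulr_sumr; apply eq_bigr => a _; rewrite mulr_sumr; apply eq_bigr => b _.
  unfold dG, dY; simpl; ring.
have L2 : \sum_(i < n) (\sum_(k < n) v 0 k * dY k i) * bf (fun a b => g x a b) v (ecoord R i) =
   \sum_(a < n) \sum_(b < n) \sum_(c < n) v 0 a * dY a c * (g x c b + g x b c) * v 0 b.
  rewrite [RHS]ex23 [RHS]ex12; apply eq_bigr => c _; rewrite bf_ecoord.
  rewrite mulr_suml; apply eq_bigr => a _; rewrite mulr_sumr; apply eq_bigr => b _.
  unfold dG, dY; simpl; ring.
rewrite -/dG L1 L2.
transitivity (\sum_(a < n) \sum_(b < n) \sum_(c < n) (Y x 0 c * dG c a b * v 0 a * v 0 b)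
  + \sum_(a < n) \sum_(b < n) \sum_(c < n) (g x c b * dY a c * v 0 a * v 0 b)
  + \sum_(a < n) \sum_(b < n) \sum_(c < n) (g x a c * dY b c * v 0 a * v 0 b)); last first.
  rewrite /qf /lie_metric -!big_split; apply eq_bigr => a _; rewrite -!big_split.
  apply eq_bigr => b _; rewrite !mulr_suml -!big_split; apply eq_bigr => c _.
  unfold dG, dY; simpl; ring.
rewrite [X in _ = _ + X]ex12 -addrA; congr (_ + _).
rewrite -!big_split; apply eq_bigr => a _; rewrite -!big_split.
apply eq_bigr => b _; rewrite -!big_split; apply eq_bigr => c _.
unfold dG, dY; simpl; ring.
Qed.

Lemma lie_sym (U : set E) (g : E -> 'M[R]_n) (Y : E -> E) x a b :
  open U -> U x -> (forall y, U y -> (g y)^T = g y) ->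
  lie_metric g Y x a b = lie_metric g Y x b a.
Proof.
move=> oU Ux Hs.
have gs : forall y i j, U y -> g y i j = g y j i.
  move=> y i j Uy; have := Hs y Uy; move/matrixP/(_ j i); by rewrite mxE.
rewrite /lie_metric; apply eq_bigr => k _.
have -> : derive (fun y => g y a b) x (ecoord R k) = derive (fun y => g y b a) x (ecoord R k).
  apply: near_eq_derive.
  have hU : nbhs x U by exact: oU.
  by apply: filterS hU => y Uy; exact: gs.
rewrite (gs x k b) // (gs x a k) //; simpl; ring.
Qed.

Lemma C_simpl (M : 'I_n -> 'I_n -> R) (v : E) (Yq AB : 'I_n -> R) tau :
  \sum_(i < n) 2^-1 * Yq i
  + \sum_(i < n) (2^-1 * AB i - tau * (2^-1 * (v 0 i * bf M v (ecoord R i))))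
  + 2^-1 * qf M v * tau
  = 2^-1 * (\sum_(i < n) Yq i + \sum_(i < n) AB i - tau * qf M v).
Proof.
rewrite sumrB -!mulr_sumr sum_v_bf; ring.
Qed.

End Aux7.
Lemma g_nz (R : realType) (n : nat) (M : 'M[R]_n) (k : 'I_n) :
  \det M != 0 -> exists a b, M a b != 0.
Proof.
case: n M k => [|n'] M k; first by case: k.
move=> Hd; case: (pselect (exists a b, M a b != 0)) => // Hn; exfalso.
have M0 : M = 0.
  apply/matrixP => a b; rewrite mxE; apply/eqP; apply/negPn/negP => h.
  by apply: Hn; exists a, b.
by move: Hd; rewrite M0 det0 eqxx.
Qed.

Section Aux9.
Variables (R : realType) (n : nat).
Local Notation E := 'rV[R]_n.

Lemma prolong1_L1 (xi : R -> E -> R) (eta : R -> E -> E) V1 t x w :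
  prolong1 xi eta (Lag1 V1) t x w =
  xi t x * derive (fun s => - V1 s x) t 1
  + \sum_(i < n) eta t x 0 i * derive (fun y => - V1 t y) x (ecoord R i).
Proof.
rewrite /prolong1; under [X in _ + X]eq_bigr do rewrite dLv_Lag1 mulr0.
by rewrite big1_eq addr0.
Qed.

Lemma order_conseq (U : set E) (g : E -> 'M[R]_n) V0 (xi : R -> E -> R) (eta : R -> E -> E) t x :
  open U -> U x -> (forall y, U y -> (g y)^T = g y) -> \det (g x) != 0 ->
  (forall i j, differentiable (fun y => g y i j) x) ->
  differentiable (fun y => V0 t y) x ->
  differentiable (fun y => eta t y) x ->
  (forall v, exists e0 e1, forall s,
     prolong1 xi eta (Lag0 g V0) t x (s *: v) + Lag0 g V0 t x (s *: v) * totd xi t x (s *: v)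
     + (e0 + s * e1) = 0) ->
  (forall k, dx k xi t x = 0) /\
  (forall i j, lie_metric g (eta t) x i j = dt xi t x * g x i j).
Proof.
move=> oU Ux Hs Hdet dg dV dE Hv.
have gs : forall i j, g x i j = g x j i.
  move=> i j; have := Hs x Ux; move/matrixP/(_ j i); by rewrite mxE.
have HD : forall v, qf (fun a b => g x a b) v * lf (fun k => dx k xi t x) v = 0.
  move=> v; have [e0 [e1 He]] := Hv v.
  have := core_poly xi eta v dg dV => /= -[a0 [a1 Ha]].
  have [_ hD] := extract_core Ha He.
  rewrite D_simpl in hD.
  move: hD => /eqP; rewrite mulf_eq0 => /orP [|/eqP //].
  by rewrite oppr_eq0 invr_eq0 pnatr_eq0.
have HC : forall v, qf (fun a b => lie_metric g (eta t) x a b - dt xi t x * g x a b) v = 0.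
  move=> v; have [e0 [e1 He]] := Hv v.
  have := core_poly xi eta v dg dV => /= -[a0 [a1 Ha]].
  have [hC _] := extract_core Ha He.
  rewrite C_simpl in hC.
  have LQ : \sum_(i < n) (\sum_(k < n) v 0 k * dx k eta t x 0 i) *
        bf (fun a b => g x a b) v (ecoord R i)
     = \sum_(i < n) (\sum_(k < n) v 0 k * derive (fun y => eta t y 0 i) x (ecoord R k)) *
        bf (fun a b => g x a b) v (ecoord R i).
    apply eq_bigr => i _; congr (_ * _); apply eq_bigr => k _; by rewrite dx_comp.
  rewrite LQ in hC.
  rewrite qf_lin -lie_qf; lra.
split.
  move=> k.
  have := @cubic_arg _ _ (fun a b => g x a b) (fun k => dx k xi t x)
    (exists_qf_nz gs (g_nz k Hdet)) HD k.
  by [].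
move=> i j; have := qf_polar HC i j.
rewrite (@lie_sym _ _ U g (eta t) x j i oU Ux Hs) (gs j i); lra.
Qed.

End Aux9.

Theorem theorem1 (R : realType) (n : nat) (U : set 'rV[R]_n)
  (g : 'rV[R]_n -> 'M[R]_n) (V0 V1 : R -> 'rV[R]_n -> R)
  (xi0 xi1 : R -> 'rV[R]_n -> R) (eta0 eta1 : R -> 'rV[R]_n -> 'rV[R]_n) :
  open U ->
  (forall x, U x -> (g x)^T = g x) ->
  (forall x, U x -> \det (g x) != 0) ->
  (forall x i j, U x -> differentiable (fun y => g y i j) x) ->
  regular U V0 -> regular U V1 ->
  regular U xi0 -> regular U xi1 -> regular U eta0 -> regular U eta1 ->
  approx_noether U (Lag0 g V0) (Lag1 V1) xi0 xi1 eta0 eta1 ->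
  (* xi_A = xi_A(t): no dependence on the x^k *)
  (forall t x (k : 'I_n), U x -> dx k xi0 t x = 0 /\ dx k xi1 t x = 0) /\
  (* eta_A(t,.) homothetic: L_{eta_A} g_ij = xi_{A,t} g_ij *)
  (forall t x (i j : 'I_n), U x ->
     lie_metric g (eta0 t) x i j = dt xi0 t x * g x i j /\
     lie_metric g (eta1 t) x i j = dt xi1 t x * g x i j).
Proof.
move=> oU Hs Hdet dg rV0 rV1 rxi0 rxi1 reta0 reta1 [f0 [f1 [_ [_ HN]]]].
have key : forall t x, U x ->
   ((forall k, dx k xi0 t x = 0) /\
    (forall i j, lie_metric g (eta0 t) x i j = dt xi0 t x * g x i j)) /\
   ((forall k, dx k xi1 t x = 0) /\
    (forall i j, lie_metric g (eta1 t) x i j = dt xi1 t x * g x i j)).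
  move=> t x Ux.
  have dgx : forall i j, differentiable (fun y => g y i j) x by move=> i j; exact: dg.
  have [_ dV0] := rV0 t x Ux.
  have [_ dE0] := reta0 t x Ux.
  have [_ dE1] := reta1 t x Ux.
  split.
    apply: (order_conseq oU Ux Hs (Hdet x Ux) dgx dV0 dE0) => v.
    exists (- dt f0 t x), (- lf (fun k => dx k f0 t x) v) => s.
    have [H0 _] := HN t x (s *: v) Ux.
    rewrite !totd_scalR in H0 *; rewrite -H0; ring.
  apply: (order_conseq oU Ux Hs (Hdet x Ux) dgx dV0 dE1) => v.
  exists (xi0 t x * derive (fun s => - V1 s x) t 1
    + \sum_(i < n) eta0 t x 0 i * derive (fun y => - V1 t y) x (ecoord R i)
    - V1 t x * dt xi0 t x - dt f1 t x).
  exists (- V1 t x * lf (fun k => dx k xi0 t x) v - lf (fun k => dx k f1 t x) v) => s.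
  have [_ H1] := HN t x (s *: v) Ux.
  rewrite prolong1_L1 !totd_scalR /Lag1 in H1; rewrite !totd_scalR -[X in _ = X]H1; ring.
split.
  move=> t x k Ux; have [[h0 _] [h1 _]] := key t x Ux; split; [exact: h0 | exact: h1].
move=> t x i j Ux; have [[_ h0] [_ h1]] := key t x Ux; split; [exact: h0 | exact: h1].
Qed.
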